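(* Let $X$ be a finite almost simple group with socle $S=\mathrm{soc}(X)$. Then $\sigma(X)\geq 3$.
   Context: $\sigma(X)$ is defined as the largest positive integer $\sigma$ for which there exist a core-free maximal subgroup $Y$ of $X$ and elements $s_1,\dots,s_\sigma\in S$ such that $Y^{s_1}\cap S > Y^{s_1}\cap Y^{s_2}\cap S > \dots > Y^{s_1}\cap Y^{s_2}\cap\dots\cap Y^{s_\sigma}\cap S$ (strict inclusions). *)

(* Defs.v *)
From mathcomp Require Import all_boot all_fingroup all_solvable.
Set Implicit Arguments. Unset Strict Implicit. Unset Printing Implicit Defensive.
Local Open Scope group_scope.

Definition socle (gT : finGroupType) (X : {set gT}) : {set gT} :=
  << \bigcup_(N : {group gT} | minnormal N X) N >>.

(* X is almost simple: it has a nonabelian simple normal subgroup S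
   with trivial centraliser in X (equivalently S <= X <= Aut(S)). *)
Definition almost_simple (gT : finGroupType) (X : {group gT}) : Prop :=
  exists S : {group gT},
    [/\ S <| X, simple S, ~~ abelian S & 'C_X(S) = 1].

(* I_j = Y^{s_0} ∩ ... ∩ Y^{s_j} ∩ S  (0-indexed) *)
Definition chain_term (gT : finGroupType) (S Y : {set gT}) (s : seq gT) (j : nat)
  : {set gT} :=
  (\bigcap_(i < j.+1) (Y :^ nth 1 s i)) :&: S.

Definition strict_chain (gT : finGroupType) (S Y : {set gT}) (s : seq gT) : bool :=
  all (fun x => x \in S) s &&
  [forall j : 'I_(size s), (j.+1 < size s) ==>
     (chain_term S Y s j.+1 \proper chain_term S Y s j)].

Definition sigma_attained (gT : finGroupType) (X S : {set gT}) (k : nat) : bool :=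
  [exists Y : {group gT}, exists t : k.-tuple gT,
     [&& maximal Y X, gcore Y X == 1 & strict_chain S Y t]].

(* sigma(X): the largest positive k attained; a strict chain of subsets of S
   containing 1 has at most #|S| <= #|X| terms, so the bound is harmless. *)
Definition sigma (gT : finGroupType) (X S : {set gT}) : nat :=
  \max_(k < #|X|.+1 | (0 < k) && sigma_attained X S k) k.

(* Main.v *)
Require Import Defs.
From mathcomp Require Import all_boot all_fingroup all_solvable.
From mathcomp Require Import vcharacter.
Set Implicit Arguments. Unset Strict Implicit. Unset Printing Implicit Defensive.
Local Open Scope group_scope.

Lemma frob_step (gT : finGroupType) (S Y : {group gT}) :
  simple S -> Y :&: S != 1 -> ~~ (S \subset Y) ->
  (forall g, g \in S -> (Y :&: S) :^ g = Y :&: S -> g \in Y) ->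
  exists2 a, a \in S & (Y :&: Y :^ a :&: S != 1) && ~~ (Y :&: S \subset Y :^ a).
Proof.
move=> simS ntH nSY hN.
have [a /andP[Sa Ha] | hnone] :=
  pickP [pred a | (a \in S) && ((Y :&: Y :^ a :&: S != 1) && ~~ (Y :&: S \subset Y :^ a))].
  by exists a.
exfalso.
pose H := (Y :&: S)%G.
have frob : [Frobenius S with complement H].
  apply/andP; split.
    apply: contra nSY => /eqP eq; by rewrite -eq subsetIl.
  apply/normedTI_P; split.
  - by rewrite setD_eq0 subG1.
  - by rewrite subsetI subsetIr normD1 normG.
  move=> g Sg; rewrite -setI_eq0 => /set0Pn [x /setIP [xH]].
  rewrite conjD1g => /setD1P [nx1 xHg].
  have /setD1P [_ xH'] := xH.
  have := hnone g; rewrite /= Sg /=.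
  have ntL : Y :&: Y :^ g :&: S != 1.
    apply/trivgPn; exists x => //.
    move: xHg; rewrite /H /= conjIg (conjGid Sg) => /setIP [xYg xS].
    move: xH'; rewrite inE => /andP [xY _].
    by rewrite !inE xY xYg xS.
  rewrite ntL /= => /negbFE sHY.
  have eHg : (Y :&: S) :^ g = Y :&: S.
    apply/eqP; rewrite eq_sym eqEcard cardJg leqnn andbT.
    by rewrite conjIg (conjGid Sg) subsetI sHY subsetIr.
  by rewrite inE (hN g Sg eHg) Sg.
have [K frobK] := Frobenius_kernel_exists frob.
have [defS ntK _ prK _] := Frobenius_context frobK.
have [nKS _ _ _ _] := sdprod_context defS.
have [_ simP] := simpleP _ simS.
case: (simP K nKS) => eK.
  by move: ntK; rewrite eK eqxx.
by move: prK; rewrite eK properE subxx.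
Qed.

Lemma main_aux (gT : finGroupType) (X S0 S : {group gT}) :
  S0 <| X -> simple S0 -> ~~ abelian S0 -> 'C_X(S0) = 1 -> S0 \subset S ->
  3 < #|X|.+1 /\ sigma_attained X S 3.
Proof.
move=> nS0X simS nabS cXS sS0S.
have [ntS simP] := simpleP _ simS.
have [sS0X nS0X'] := andP nS0X.
pose p := pdiv #|S0|.
have [P sylP] := Sylow_exists p S0.
have sPS : P \subset S0 by apply: pHall_sub sylP.
have ntP : P :!=: 1.
  rewrite -cardG_gt1; have [_ ->] := pHallP _ _ _ sylP.
  by rewrite p_part_gt1 pi_pdiv cardG_gt1.
have nSP : ~~ (S0 \subset P).
  apply/negP => sSP.
  have pS : p.-group S0 by apply: pgroupS sSP (pHall_pgroup sylP).
  have ntZ : 'Z(S0) != 1 by rewrite center_nil_eq1 ?(pgroup_nil pS).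
  case: (simP _ (center_normal S0)) => eZ.
    by move: ntZ; rewrite eZ eqxx.
  by move/negP: nabS; apply; apply/center_idP.
have ltPS : #|P| < #|S0| by apply: proper_card; rewrite properE sPS.
have card3 : 3 < #|X|.+1.
  rewrite ltnS; apply: leq_trans (subset_leq_card sS0X).
  by apply: leq_ltn_trans ltPS; rewrite cardG_gt1.
split=> //.
have nXN : ~~ (X \subset 'N_X(P)).
  apply/negP => sXN.
  have nPS : P <| S0.
    rewrite /normal sPS; apply: subset_trans sS0X (subset_trans sXN _).
    exact: subsetIr.
  case: (simP _ nPS) => eP; first by move: ntP; rewrite eP eqxx.
  by move: nSP; rewrite -eP subxx.
have [eN | [Y maxY sNY]] := maximal_exists (subsetIl X 'N(P)).
  by move: nXN; rewrite eN subxx.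
have [prYX maxYP] := maxgroupP maxY.
have sYX : Y \subset X by apply: proper_sub prYX.
have nYX : ~~ (X \subset Y) by move: prYX; rewrite properE => /andP[].
have defX := Frattini_arg nS0X sylP.
have nSY : ~~ (S0 \subset Y).
  apply: contra nYX => sSY; rewrite -defX mul_subG //.
have nS0Y : Y \subset 'N(S0) := subset_trans sYX nS0X'.
have sXYS : X \subset Y * S0.
  rewrite (normC nS0Y) -{1}defX; apply: mulgS sNY.
have core1 : gcore Y X = 1.
  pose C := [group of gcore Y X].
  have sCY : C \subset Y := gcore_sub Y X.
  have sCX : C \subset X := subset_trans sCY sYX.
  have nCX : X \subset 'N(C) := gcore_norm Y X.
  have nCSS : (C :&: S0)%G <| S0.
    rewrite /normal subsetIr normsI ?normG //; exact: subset_trans sS0X nCX.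
  case: (simP _ nCSS) => eCS.
    have {}eCS : C :&: S0 = 1 := eCS.
    have sCcent : C \subset 'C(S0).
      apply/commG1P; apply/eqP; rewrite eqEsubset sub1G andbT.
      apply: (subset_trans (_ : _ \subset C :&: S0)); last by rewrite eCS; apply: subxx.
      apply: commg_subI.
        by rewrite subsetI subxx (subset_trans sCX nS0X').
      by rewrite subsetI subxx (subset_trans sS0X nCX).
    apply/eqP; rewrite eqEsubset sub1G andbT -cXS subsetI; apply/andP; split; [exact: sCX | exact: sCcent].
  by move: nSY; rewrite -eCS => /negP; case; apply: subset_trans (subsetIl _ _) sCY.
have ntH : Y :&: S0 != 1.
  apply: contraNneq ntP => eH; rewrite -subG1 -eH subsetI sPS andbT.
  apply: subset_trans sNY; by rewrite subsetI (subset_trans sPS sS0X) normG.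
have hN : forall g, g \in S0 -> (Y :&: S0) :^ g = Y :&: S0 -> g \in Y.
  move=> g Sg eHg.
  have sYN : Y \subset 'N_X(Y :&: S0).
    by rewrite subsetI sYX normsI ?normG.
  have gN : g \in 'N_X(Y :&: S0).
    by rewrite inE (subsetP sS0X g Sg); apply/normP.
  have [prN | nprN] := boolP ('N_X(Y :&: S0) \proper X).
    by rewrite -(maxYP _ prN sYN).
  have sXN : X \subset 'N_X(Y :&: S0).
    by move: nprN; rewrite properE subsetIl /= negbK.
  have nHS : (Y :&: S0)%G <| S0.
    rewrite /normal subsetIr /=; apply: subset_trans sS0X (subset_trans sXN _).
    exact: subsetIr.
  case: (simP _ nHS) => eH; first by move: ntH; rewrite eH eqxx.
  by move: nSY; rewrite -eH subsetIl.
have [a Sa /andP [ntL nHa]] := frob_step simS ntH nSY hN.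
set L := Y :&: Y :^ a :&: S0 in ntL.
have [b /andP [Sb nLb] | hb] := pickP [pred b | (b \in S0) && ~~ (L \subset Y :^ b)]; last first.
  exfalso; move/negP: ntL; apply; apply/eqP/trivgP; rewrite -core1.
  apply/bigcapsP => x Xx.
  have /mulsgP [y s Yy Ss ->] := subsetP sXYS x Xx.
  rewrite conjsgM (conjGid Yy).
  by have := hb s; rewrite /= Ss /= => /negbFE.
apply/existsP; exists Y; apply/existsP; exists [tuple 1; a; b].
rewrite maxY core1 eqxx /=.
rewrite /strict_chain /= group1 (subsetP sS0S a Sa) (subsetP sS0S b Sb) /=.
apply/forallP => -[[|[|j]] lt] //=; rewrite /chain_term; do 6?rewrite big_ord_recl; rewrite !big_ord0 /= !setIT conjsg1.
- rewrite properE; apply/andP; split; first by rewrite setSI // subsetIl.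
  apply: contra nHa => h.
  apply: subset_trans (setIS Y sS0S) (subset_trans h _).
  exact: subset_trans (subsetIl _ _) (subsetIr _ _).
- rewrite properE; apply/andP; split.
    by rewrite setSI // setIS // subsetIl.
  apply: contra nLb => h.
  apply: subset_trans (setIS _ sS0S) (subset_trans h _).
  apply: subset_trans (subsetIl _ _) _.
  apply: subset_trans (subsetIr _ _) (subsetIr _ _).
Qed.

Theorem mainTheorem7 (gT : finGroupType) (X S : {group gT}) :
  almost_simple X -> S :=: socle X -> 3 <= sigma X S.
Proof.
move=> [S0 [nS0X simS nabS cXS]] eS.
have [ntS simP] := simpleP _ simS.
have [sS0X nS0X'] := andP nS0X.
have sS0S : S0 \subset S.
  rewrite eS /socle; apply: sub_gen.
  apply: (bigcup_sup S0 (P := fun N : {group gT} => minnormal N X)).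
  apply/mingroupP; split; first by rewrite ntS nS0X'.
  move=> M /andP [ntM nMX] sMS.
  have nMS : M <| S0 by rewrite /normal sMS (subset_trans sS0X nMX).
  case: (simP _ nMS) => eM //.
  by move: ntM; rewrite eM eqxx.
have [lt3 att] := main_aux nS0X simS nabS cXS sS0S.
rewrite /sigma.
exact: (leq_bigmax_cond (F := fun k : 'I_#|X|.+1 => nat_of_ord k) (Ordinal lt3) (andb_true_intro (conj (isT : 0 < 3) att))).
Qed.
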